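(* The simplicial complex $\Sigma_D^q$ is shellable.
   Context: $D$ is a finite directed multigraph without loops on vertex set $V$ with arc set $\mathbb E$ (arc $e$ has head $e_+$, tail $e_-$), and $q\in V$ is such that every vertex is reachable from $q$ by a directed path. $S=k[y_e:e\in\mathbb E]$ over a field $k$. $\mathcal C_D^q\subseteq S$ is generated by $\prod_{e\in\mathbb E:\,e_+\in A,\,e_-\notin A}y_e$ for all nonempty $A\subseteq V\setminus\{q\}$, and $\Sigma_D^q$ is the simplicial complex on the vertex set $\{y_e:e\in\mathbb E\}$ whose Stanley–Reisner ideal is $\mathcal C_D^q$. *)

(* Defs.v *)
From mathcomp Require Import all_boot.
Set Implicit Arguments. Unset Strict Implicit. Unset Printing Implicit Defensive.

(* A finite directed multigraph: vertex type V, arc type E (parallel arcs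
   allowed), head/tail maps.  Arc e goes from (tail e) to (head e). *)

Definition arc_rel (V E : finType) (head tail : E -> V) : rel V :=
  fun u v => [exists e : E, (tail e == u) && (head e == v)].

Definition all_reachable_from (V E : finType) (head tail : E -> V) (q : V) : Prop :=
  forall v : V, connect (arc_rel head tail) q v.

(* support of the generator  prod_{e : e_+ in A, e_- notin A} y_e  *)
Definition cut_set (V E : finType) (head tail : E -> V) (A : {set V}) : {set E} :=
  [set e | (head e \in A) && (tail e \notin A)].

(* Faces of Sigma_D^q: the sets F of arcs whose squarefree monomial
   prod_{e in F} y_e is NOT in the squarefree monomial ideal C_D^q, i.e. no
   generator prod_{e in cut_set A} y_e (A nonempty, A subset V \ {q})
   divides it. *)
Definition SR_face (V E : finType) (head tail : E -> V) (q : V) (F : {set E}) : bool :=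
  [forall A : {set V},
     ((A != set0) && (A \subset [set~ q])) ==> ~~ (cut_set head tail A \subset F)].

(* A simplicial complex on a finite vertex type is given by its face predicate. *)
Definition facet (T : finType) (P : pred {set T}) (F : {set T}) : bool :=
  P F && [forall G : {set T}, (P G && (F \subset G)) ==> (G == F)].

(* Shelling order (Bjorner--Wachs, not necessarily pure): a listing
   F_0,...,F_{t-1} of all facets, each exactly once, such that for all
   i < j there are k < j and x in F_j with
   F_i :&: F_j \subset F_j :\ x  and  F_k :&: F_j = F_j :\ x. *)
Definition shelling (T : finType) (P : pred {set T}) (s : seq {set T}) : Prop :=
  [/\ uniq s,
      (forall F, (F \in s) = facet P F) &
      forall j i, j < size s -> i < j ->
        exists k, exists x,
          [/\ k < j, x \in nth set0 s j,
              (nth set0 s i :&: nth set0 s j) \subset (nth set0 s j :\ x) &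
              nth set0 s k :&: nth set0 s j = nth set0 s j :\ x]].

Definition shellable (T : finType) (P : pred {set T}) : Prop :=
  exists s : seq {set T}, shelling P s.

(* Main.v *)
Require Import Defs.
From mathcomp Require Import all_boot.
Set Implicit Arguments. Unset Strict Implicit. Unset Printing Implicit Defensive.

Fixpoint lexlt (s t : seq nat) : bool :=
  match s, t with
  | _, [::] => false
  | [::], _ :: _ => true
  | x :: s', y :: t' => (x < y) || ((x == y) && lexlt s' t')
  end.

Lemma lex_irr s : ~~ lexlt s s.
Proof. by elim: s => //= x s IH; rewrite ltnn eqxx. Qed.

Lemma lex_trans s t u : lexlt s t -> lexlt t u -> lexlt s u.
Proof.
elim: s t u => [|x s IH] [|y t] [|z u] //= /orP[xy|/andP[/eqP-> st]] /orP[yz|/andP[/eqP<- tu]].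
- by rewrite (ltn_trans xy yz).
- by rewrite xy.
- by rewrite yz.
- by rewrite eqxx (IH _ _ st tu) orbT.
Qed.

Lemma lex_total s t : s != t -> lexlt s t || lexlt t s.
Proof.
elim: s t => [|x s IH] [|y t] //= ne.
case: (ltngtP x y) => //= xy; move: ne; rewrite xy eqseq_cons eqxx /= => /IH.
by rewrite ?eqxx ?ltnn /=; case/orP => ->; rewrite ?orbT.
Qed.

Lemma lex_char s t : lexlt s t -> exists p, [/\ take p s = take p t, p < size t &
  (p = size s \/ (p < size s /\ nth 0 s p < nth 0 t p))].
Proof.
elim: s t => [|x s IH] [|y t] //=.
  by move=> _; exists 0; split=> //; left.
case/orP=> [xy|/andP[/eqP<- /IH[p [tk pt H]]]].
  by exists 0; split=> //; right.
exists p.+1; rewrite /= tk ltnS; split=> //; case: H => [->|[]]; [left|right] => //.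
Qed.

Lemma lex_intro s t p : take p s = take p t -> p < size s -> p < size t ->
  nth 0 s p < nth 0 t p -> lexlt s t.
Proof.
elim: p s t => [|p IH] [|x s] [|y t] //= .
  by move=> _ _ _ ->.
by case=> -> tk; rewrite !ltnS => ps pt lt; rewrite eqxx (IH _ _ tk ps pt lt) orbT.
Qed.

Definition rk (E : finType) (e : E) : nat := enum_rank e.

Definition candA (V E : finType) (head tail : E -> V) (G : {set E}) (S : {set V}) (e : E) : bool :=
  [&& e \in G, tail e \in S & head e \notin S].

Definition best (V E : finType) (head tail : E -> V) (G : {set E}) (S : {set V}) : option E :=
  [pick e | candA head tail G S e && [forall e', candA head tail G S e' ==> (rk e <= rk e')]].

Lemma rk_inj (E : finType) : injective (@rk E).
Proof. move=> x y /eqP; rewrite /rk => /eqP/val_inj; apply: enum_rank_inj. Qed.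

Lemma best_Some (V E : finType) (head tail : E -> V) G S e :
  best head tail G S = Some e ->
  candA head tail G S e /\ forall e', candA head tail G S e' -> rk e <= rk e'.
Proof.
rewrite /best; case: pickP => [x /andP[cx /forallP mx] [<-]|//]; split=> // e' ce'.
by have := mx e'; rewrite ce'.
Qed.

Lemma best_None (V E : finType) (head tail : E -> V) G S :
  best head tail G S = None -> forall e, ~~ candA head tail G S e.
Proof.
rewrite /best; case: pickP => // H _ e; apply/negP => ce.
case: (arg_minnP (@rk E) ce) => m cm mm.
have := H m; rewrite cm /=; move/negP; apply; apply/forallP => e'.
by apply/implyP; apply: mm.
Qed.

Lemma best_uniq (V E : finType) (head tail : E -> V) G S e :
  candA head tail G S e -> (forall e', candA head tail G S e' -> rk e <= rk e') ->
  best head tail G S = Some e.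
Proof.
move=> ce me; case B: (best head tail G S) => [x|].
  have [cx mx] := best_Some B; congr Some; apply: rk_inj; apply/eqP.
  by rewrite eqn_leq mx // me.
by have := best_None B e; rewrite ce.
Qed.
Definition Sof (V E : finType) (head : E -> V) (q : V) (w : seq E) : {set V} :=
  [set v in q :: map head w].

Fixpoint run (V E : finType) (head tail : E -> V) (q : V) (G : {set E}) (n : nat) : seq E :=
  match n with
  | 0 => [::]
  | n'.+1 => let w := run head tail q G n' in
     match best head tail G (Sof head q w) with
     | Some e => rcons w e
     | None => w
     end
  end.

Lemma run_nth (V E : finType) (head tail : E -> V) q G n t e0 :
  t < size (run head tail q G n) ->
  best head tail G (Sof head q (take t (run head tail q G n))) =
    Some (nth e0 (run head tail q G n) t).
Proof.
elim: n t => [|n IH] t //=.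
case B: best => [e|]; last exact: IH.
rewrite size_rcons ltnS leq_eqVlt => /orP[/eqP->|lt].
  by rewrite -cats1 take_size_cat // nth_cat ltnn subnn.
by rewrite -cats1 takel_cat ?(ltnW lt) // nth_cat lt; apply: IH.
Qed.

Lemma run_size (V E : finType) (head tail : E -> V) q G n :
  size (run head tail q G n) <= n.
Proof.
elim: n => //= n IH; case: best => [e|]; first by rewrite size_rcons.
exact: leqW.
Qed.

Lemma run_stop (V E : finType) (head tail : E -> V) q G n :
  size (run head tail q G n) < n ->
  best head tail G (Sof head q (run head tail q G n)) = None.
Proof.
elim: n => //= n IH; case B: best => [e|].
  by rewrite size_rcons ltnS => /IH; rewrite B.
by move=> _; rewrite B.
Qed.

Lemma run_prefix (V E : finType) (head tail : E -> V) q G n m :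
  n <= m -> take (size (run head tail q G n)) (run head tail q G m) = run head tail q G n.
Proof.
move=> /subnKC <-; elim: (m - n) => [|k IH]; first by rewrite addn0 take_size.
rewrite addnS /=; set W := run head tail q G (n + k).
have hs : size (run head tail q G n) <= size W.
  have := congr1 size IH; rewrite size_take; case: ltnP => [/ltnW //|_ ->] //.
case: best => [e|] //.
by rewrite -cats1 takel_cat.
Qed.

Lemma run_uniq (V E : finType) (head tail : E -> V) q G n :
  uniq (q :: map head (run head tail q G n)).
Proof.
elim: n => //= n IH; case B: best => [e|] //.
have [/and3P[_ _ he] _] := best_Some B.
move: IH he; rewrite map_rcons rcons_uniq mem_rcons /Sof !inE.
case/andP=> qn -> /norP[hq hn]; rewrite hn (negbTE qn) eq_sym (negbTE hq).
done.
Qed.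

Lemma run_sub (V E : finType) (head tail : E -> V) q G n e :
  e \in run head tail q G n -> (e \in G) && (tail e \in Sof head q (run head tail q G n)).
Proof.
elim: n => //= n IH; case B: best => [f|] /=; last exact: IH.
have [/and3P[fG ft _] _] := best_Some B.
have sub : Sof head q (run head tail q G n) \subset Sof head q (rcons (run head tail q G n) f).
  apply/subsetP => v; rewrite /Sof !inE map_rcons mem_rcons inE.
  by case/orP=> ->; rewrite ?orbT.
rewrite mem_rcons inE => /orP[/eqP->|/IH/andP[eG et]].
  by rewrite fG (subsetP sub).
by rewrite eG (subsetP sub).
Qed.

Definition good (V E : finType) (head tail : E -> V) (q : V) (G : {set E}) : Prop :=
  forall A : {set V}, A != set0 -> q \notin A ->
    exists e, [/\ e \in G, head e \in A & tail e \notin A].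

Lemma subC1 (V : finType) (A : {set V}) q : (A \subset [set~ q]) = (q \notin A).
Proof.
apply/subsetP/idP => [H|H v vA]; first by apply/negP => /H; rewrite !inE eqxx.
by rewrite !inE; apply: contraNneq H => <-.
Qed.

Lemma SR_goodP (V E : finType) (head tail : E -> V) q F :
  SR_face head tail q F <-> good head tail q (~: F).
Proof.
split.
  move=> /forallP H A A0 qA; have := H A; rewrite A0 subC1 qA /=.
  case/subsetPn => e; rewrite /cut_set inE => /andP[hA tA] eF.
  by exists e; rewrite inE.
move=> H; apply/forallP => A; apply/implyP => /andP[A0]; rewrite subC1 => qA.
have [e [eF hA tA]] := H A A0 qA; apply/subsetPn; exists e.
  by rewrite /cut_set inE hA.
by move: eF; rewrite inE.
Qed.

Lemma good_mono (V E : finType) (head tail : E -> V) q (G H : {set E}) :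
  G \subset H -> good head tail q G -> good head tail q H.
Proof.
move=> sGH gG A A0 qA; have [e [eG ?]] := gG A A0 qA; exists e; split=> //.
exact: (subsetP sGH).
Qed.

Lemma Sof_rcons (V E : finType) (head : E -> V) q w e :
  Sof head q (rcons w e) = head e |: Sof head q w.
Proof.
apply/setP => v; rewrite /Sof !inE map_rcons mem_rcons !inE.
by case: (v == q); case: (v == head e); rewrite ?orbT.
Qed.

Lemma run_rel (V E : finType) (head tail : E -> V) q G n (B : {set V}) :
  B != set0 -> B \subset Sof head q (run head tail q G n) -> q \notin B ->
  exists e, [/\ e \in run head tail q G n, head e \in B & tail e \notin B].
Proof.
elim: n B => [|n IH] B B0 /=.
  move=> sB qB; case/set0Pn: B0 => v vB; have := subsetP sB v vB.
  by rewrite /Sof !inE => /eqP vq; move: qB; rewrite -vq vB.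
case Bs: best => [f|] /=; last exact: IH.
have [/and3P[fG ft fh] _] := best_Some Bs.
rewrite Sof_rcons => sB qB.
have sub1 : forall e, e \in run head tail q G n -> e \in rcons (run head tail q G n) f.
  by move=> e; rewrite mem_rcons inE => ->; rewrite orbT.
case hB: (head f \in B).
  case tB: (tail f \in B); last by exists f; rewrite mem_rcons inE eqxx hB tB.
  have B1 : B :\ head f != set0.
    apply/set0Pn; exists (tail f); rewrite !inE tB andbT.
    by apply: contraNneq fh => <-.
  have sB1 : B :\ head f \subset Sof head q (run head tail q G n).
    apply/subsetP => v; rewrite !inE => /andP[vh vB].
    by have := subsetP sB v vB; rewrite !inE (negbTE vh).
  have qB1 : q \notin B :\ head f by rewrite !inE (negbTE qB) andbF.
  have [e [ew eh et]] := IH _ B1 sB1 qB1; exists e; split; first exact: sub1.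
    by move: eh; rewrite !inE => /andP[].
  have /andP[_ ets] := run_sub ew.
  move: et; rewrite !inE negb_and negbK => /orP[/eqP etf|//].
  by move: fh; rewrite -etf ets.
have sB1 : B \subset Sof head q (run head tail q G n).
  apply/subsetP => v vB; have := subsetP sB v vB; rewrite !inE.
  by case/orP=> // /eqP vh; move: hB; rewrite -vh vB.
have [e [? ? ?]] := IH _ B0 sB1 qB; exists e; split=> //; exact: sub1.
Qed.

Lemma run_cover (V E : finType) (head tail : E -> V) q G :
  good head tail q G -> Sof head q (run head tail q G #|V|) = setT.
Proof.
move=> gG; set w := run head tail q G #|V|.
have lt : size w < #|V|.
  have := run_uniq head tail q G #|V|; rewrite -/w => /card_uniqP /= => c.
  by have := max_card (mem (q :: map head w)); rewrite c /= size_map.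
have := run_stop lt; rewrite -/w => bN.
apply/eqP; apply: contraT => ne.
have A0 : ~: Sof head q w != set0.
  by apply: contra ne => /eqP/(congr1 (@setC _)); rewrite setCK setC0 => ->.
have qA : q \notin ~: Sof head q w by rewrite !inE eqxx.
have [e [eG eh et]] := gG _ A0 qA.
have := best_None bN e; rewrite /candA eG.
by move: eh et; rewrite !inE negbK => -> ->.
Qed.

Lemma uniq_map_inj (T1 T2 : eqType) (f : T1 -> T2) s :
  uniq (map f s) -> {in s &, injective f}.
Proof.
elim: s => //= x s IH /andP[nx us] y z; rewrite !inE.
case/orP=> [/eqP->|ys] /orP[/eqP->|zs] fe //.
- by move: nx; rewrite fe (map_f f zs).
- by move: nx; rewrite -fe (map_f f ys).
- exact: IH.
Qed.

Definition wd (V E : finType) (head tail : E -> V) (q : V) (G : {set E}) :=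
  run head tail q G #|V|.

Lemma run_headq (V E : finType) (head tail : E -> V) q G n e :
  e \in run head tail q G n -> head e != q.
Proof.
move=> ew; move: (run_uniq head tail q G n) => /= /andP[nq _].
apply: contraNneq nq => h; rewrite -{1}h; exact: map_f.
Qed.

Lemma run_headinj (V E : finType) (head tail : E -> V) q G n e1 e2 :
  e1 \in run head tail q G n -> e2 \in run head tail q G n -> head e1 = head e2 -> e1 = e2.
Proof.
move: (run_uniq head tail q G n) => /= /andP[_ u] e1w e2w.
exact: (uniq_map_inj u).
Qed.

Lemma word_good (V E : finType) (head tail : E -> V) q G :
  good head tail q G -> good head tail q [set e in wd head tail q G].
Proof.
move=> gG A A0 qA.
have sA : A \subset Sof head q (run head tail q G #|V|) by rewrite run_cover // subsetT.
have [e [ew eh et]] := run_rel A0 sA qA; exists e; by rewrite inE.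
Qed.

Lemma facet_word (V E : finType) (head tail : E -> V) q F :
  facet (SR_face head tail q) F -> ~: F = [set e in wd head tail q (~: F)].
Proof.
case/andP=> sF /forallP mF; have gF := (SR_goodP head tail q F).1 sF.
set W := [set e in wd head tail q (~: F)].
have gW : good head tail q W by apply: word_good.
have sW : W \subset ~: F.
  by apply/subsetP => e; rewrite inE => /run_sub /andP[].
have := mF (~: W); rewrite (SR_goodP head tail q (~: W)).2 ?setCK //.
rewrite -setCS setCK sW /= => /eqP E1; by rewrite -E1 setCK.
Qed.

Lemma facet_of (V E : finType) (head tail : E -> V) q (T : {set E}) :
  good head tail q T -> (forall e, e \in T -> head e != q) ->
  (forall e1 e2, e1 \in T -> e2 \in T -> head e1 = head e2 -> e1 = e2) ->
  facet (SR_face head tail q) (~: T).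
Proof.
move=> gT hq hi; apply/andP; split; first by apply/SR_goodP; rewrite setCK.
apply/forallP => G; apply/implyP => /andP[/SR_goodP gG sub].
have sub2 := sub; rewrite -setCS setCK in sub2.
rewrite eqEsubset -{1}(setCK G) setCS sub andbT.
apply/subsetP => e eT; apply: contraT => eG.
have A0 : [set head e] != set0 by apply/set0Pn; exists (head e); rewrite inE.
have qA : q \notin [set head e] by rewrite inE eq_sym hq.
have [g [gG' gh gt]] := gG _ A0 qA.
have gT' := subsetP sub2 g gG'.
move: gh; rewrite inE => /eqP gh.
have ge := hi _ _ gT' eT gh; by move: eG; rewrite -ge gG'.
Qed.

Lemma run_take (V E : finType) (head tail : E -> V) q G n t :
  t <= size (run head tail q G n) -> run head tail q G t = take t (run head tail q G n).
Proof.
elim: t => [|t IH] lt; first by rewrite take0.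
rewrite /= IH ?(ltnW lt) //.
have e0 : E by case: (run head tail q G n) lt => // e.
by rewrite (run_nth e0 lt) -take_nth.
Qed.

Lemma exchange (V E : finType) (head tail : E -> V) q (Ti Tj : {set E}) p e0 :
  good head tail q Tj -> Tj = [set e in wd head tail q Tj] ->
  take p (wd head tail q Ti) = take p (wd head tail q Tj) ->
  p < size (wd head tail q Ti) -> p < size (wd head tail q Tj) ->
  rk (nth e0 (wd head tail q Ti) p) < rk (nth e0 (wd head tail q Tj) p) ->
  exists T' : {set E}, [/\ facet (SR_face head tail q) (~: T'),
     nth e0 (wd head tail q Ti) p \in Ti, nth e0 (wd head tail q Ti) p \notin Tj,
     T' :|: Tj = nth e0 (wd head tail q Ti) p |: Tj &
     lexlt (map (@rk E) (wd head tail q T')) (map (@rk E) (wd head tail q Tj))].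
Proof.
move=> gj Ej tk pi pj lt.
move: tk pi pj lt Ej; rewrite /wd.
set wi := run head tail q Ti #|V|; set wj := run head tail q Tj #|V|.
move=> tk pi pj lt Ej.
set a := nth e0 wi p; set b := nth e0 wj p.
set S := Sof head q (take p wj).
have Hi : best head tail Ti S = Some a by rewrite /S -tk; exact: run_nth.
have Hj : best head tail Tj S = Some b by exact: run_nth.
have [/and3P[aTi taS haS] _] := best_Some Hi.
have [_ mj] := best_Some Hj.
have aTj : a \notin Tj.
  apply/negP => aTj; have := mj a; rewrite /candA aTj taS haS => /(_ isT).
  by rewrite leqNgt lt.
set v := head a.
set T' := a |: [set e in Tj | head e != v].
have pre : forall e, e \in take p wj -> e \in Tj /\ head e \in S.
  move=> e ep; split; first by rewrite Ej inE (mem_take ep).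
  by rewrite /S /Sof inE in_cons map_f ?orbT.
have preT' : forall e, e \in take p wj -> e \in T'.
  move=> e /pre [eT hS]; rewrite !inE eT /=; apply/orP; right.
  by apply/eqP => hv; move: haS; rewrite -/v -hv hS.
have runP : run head tail q Tj p = take p wj by apply: run_take; exact: ltnW.
have gT' : good head tail q T'.
  move=> A A0 qA; have [g [gT gh gt]] := gj A A0 qA.
  case hg: (head g != v).
    by exists g; rewrite !inE gT hg orbT.
  case ta: (tail a \in A); last first.
    by exists a; rewrite !inE eqxx -/v; move/negbFE/eqP: hg => <-; rewrite gh ta.
  have B0 : A :&: S != set0 by apply/set0Pn; exists (tail a); rewrite inE ta taS.
  have sB : A :&: S \subset Sof head q (run head tail q Tj p) by rewrite runP subsetIr.
  have qB : q \notin A :&: S by rewrite inE (negbTE qA).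
  have [e [ew eh et]] := run_rel B0 sB qB.
  have /andP[_ ets] := run_sub ew.
  exists e; split.
  - by apply: preT'; rewrite -runP.
  - by move: eh; rewrite inE => /andP[].
  - by rewrite runP -/S in ets; move: et; rewrite inE negb_and ets orbF.
have hq' : forall e, e \in T' -> head e != q.
  move=> e; rewrite !inE => /orP[/eqP->|/andP[eT _]].
    by apply/eqP => hq; move: haS; rewrite hq /S /Sof inE mem_head.
  by move: eT; rewrite Ej inE; apply: run_headq.
have hi' : forall e1 e2, e1 \in T' -> e2 \in T' -> head e1 = head e2 -> e1 = e2.
  move=> e1 e2; rewrite !inE => /orP[/eqP->|/andP[e1T h1]] /orP[/eqP->|/andP[e2T h2]] //.
  - by move=> hh; move: h2; rewrite -hh eqxx.
  - by move=> hh; move: h1; rewrite hh eqxx.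
  - move: e1T e2T; rewrite Ej !inE; exact: run_headinj.
have fT' := facet_of gT' hq' hi'.
exists T'; split=> //.
  by apply/setP => e; rewrite !inE; case: (e == a); case: (e \in Tj); rewrite ?orbT ?orbF ?andbF.
have runT' : forall t, t <= p -> run head tail q T' t = take t wj.
  elim=> [|t IH] tp; first by rewrite take0.
  have tw := ltn_trans tp pj.
  have Bj := run_nth e0 tw; rewrite -/wj in Bj.
  have tki : take t wi = take t wj.
    by rewrite -(take_takel wi (ltnW tp)) tk take_takel // ltnW.
  have nti : nth e0 wi t = nth e0 wj t by rewrite -(nth_take e0 tp) tk nth_take.
  have Bi := run_nth e0 (ltn_trans tp pi); rewrite -/wi tki nti in Bi.
  have [/and3P[cT ct ch] _] := best_Some Bj.
  have cand' : candA head tail T' (Sof head q (take t wj)) (nth e0 wj t).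
    have hmem : nth e0 wj t \in take p wj.
      by rewrite -(nth_take e0 tp); apply: mem_nth; rewrite size_takel // ltnW.
    by rewrite /candA ct ch /= andbT (preT' _ hmem).
  have mn : forall c, candA head tail T' (Sof head q (take t wj)) c -> rk (nth e0 wj t) <= rk c.
    move=> c /and3P[cc ct' ch']; move: cc; rewrite !inE => /orP[/eqP ca|/andP[cT' _]].
      rewrite ca in ct' ch' *.
      by have [_ mi] := best_Some Bi; apply: mi; rewrite /candA aTi ct' ch'.
    by have [_ mj'] := best_Some Bj; apply: mj'; rewrite /candA cT' ct' ch'.
  by rewrite /= IH ?(ltnW tp) // (best_uniq cand' mn) (take_nth e0 tw).
have aC : candA head tail T' S a by rewrite /candA taS haS !inE eqxx.
case Bp: (best head tail T' S) => [e'|]; last by have := best_None Bp a; rewrite aC.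
have [_ mp] := best_Some Bp; have le' := mp a aC.
have runp1 : run head tail q T' p.+1 = rcons (take p wj) e' by rewrite /= runT' // Bp.
have sv : p.+1 <= #|V| := leq_trans pj (run_size head tail q Tj #|V|).
have pref := run_prefix head tail q T' sv.
rewrite runp1 size_rcons size_takel ?(ltnW pj) // in pref.
set W := run head tail q T' #|V| in pref *.
have tk' : take p W = take p wj.
  by rewrite -(take_takel W (leqnSn p)) pref -cats1 take_size_cat // size_takel // ltnW.
have szT : p < size W.
  rewrite ltnNge; apply/negP => le; move: pref; rewrite take_oversize ?(leq_trans le) //.
  move=> h; have := congr1 size h; rewrite size_rcons size_takel ?(ltnW pj) // => h2.
  by move: le; rewrite h2 ltnn.
have nW : nth e0 W p = e'.
  by rewrite -(nth_take e0 (ltnSn p)) pref nth_rcons size_takel ?(ltnW pj) // ltnn eqxx.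
apply: (lex_intro (p := p)).
- by rewrite -!map_take tk'.
- by rewrite size_map.
- by rewrite size_map.
- by rewrite !(nth_map e0) // nW; apply: leq_ltn_trans lt.
Qed.

Definition keyF (V E : finType) (head tail : E -> V) (q : V) (F : {set E}) : seq nat :=
  map (@rk E) (wd head tail q (~: F)).

Definition relF (V E : finType) (head tail : E -> V) (q : V) (F G : {set E}) : bool :=
  (keyF head tail q F == keyF head tail q G) || lexlt (keyF head tail q F) (keyF head tail q G).

Lemma relF_trans (V E : finType) (head tail : E -> V) q : transitive (relF head tail q).
Proof.
move=> y x z; rewrite /relF => /orP[/eqP exy|xy] /orP[/eqP eyz|yz].
- by rewrite exy eyz eqxx.
- by rewrite exy yz orbT.
- by rewrite -eyz xy orbT.
- by rewrite (lex_trans xy yz) orbT.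
Qed.

Lemma relF_total (V E : finType) (head tail : E -> V) q : total (relF head tail q).
Proof.
move=> x y; rewrite /relF; case: (keyF head tail q x =P keyF head tail q y) => [->|/eqP ne].
  by rewrite eqxx.
by rewrite eq_sym (negbTE ne) /=; apply: lex_total.
Qed.

Lemma keyF_inj (V E : finType) (head tail : E -> V) q F G :
  facet (SR_face head tail q) F -> facet (SR_face head tail q) G ->
  keyF head tail q F = keyF head tail q G -> F = G.
Proof.
move=> fF fG /(inj_map (@rk_inj E)) eqw.
have := facet_word fF; rewrite eqw -(facet_word fG) => /(congr1 (@setC _)).
by rewrite !setCK.
Qed.

Theorem mainTheorem6 (V E : finType) (head tail : E -> V) (q : V)
  (no_loops : forall e : E, head e != tail e)
  (reach : all_reachable_from head tail q) :
  shellable (SR_face head tail q).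
Proof.
set P := SR_face head tail q.
set s := sort (relF head tail q) [seq F <- enum {set E} | facet P F].
have memS : forall F, (F \in s) = facet P F.
  by move=> F; rewrite mem_sort mem_filter mem_enum andbT.
have srt : sorted (relF head tail q) s by apply: sort_sorted; apply: relF_total.
have us : uniq s by rewrite sort_uniq filter_uniq // enum_uniq.
have ordS : forall i j, i < size s -> j < size s -> i < j ->
    relF head tail q (nth set0 s i) (nth set0 s j).
  by move=> i j ip jp ij; apply: (sorted_ltn_nth (@relF_trans V E head tail q) set0 srt).
exists s; split => // j i js ij.
have iS := ltn_trans ij js.
set Fi := nth set0 s i; set Fj := nth set0 s j.
have fi : facet P Fi by rewrite -memS mem_nth.
have fj : facet P Fj by rewrite -memS mem_nth.
have neq : Fi != Fj by rewrite /Fi /Fj nth_uniq // neq_ltn ij.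
have lx : lexlt (keyF head tail q Fi) (keyF head tail q Fj).
  move: (ordS _ _ iS js ij); rewrite /relF -/Fi -/Fj => /orP[/eqP k|//].
  by move: neq; rewrite (keyF_inj fi fj k) eqxx.
have [p [tk pj H]] := lex_char lx.
move: tk pj H; rewrite /keyF -!map_take !size_map.
set wi := wd head tail q (~: Fi); set wj := wd head tail q (~: Fj).
move=> /(inj_map (@rk_inj E)) tk pj H.
have e0 : E by case: (wj) pj => // e.
have gi : good head tail q (~: Fi) by apply/SR_goodP; case/andP: fi.
have gj : good head tail q (~: Fj) by apply/SR_goodP; case/andP: fj.
case: H => [pe|[pi lt]].
  have := run_nth e0 pj; rewrite -/wj -tk pe take_size.
  rewrite /wi /wd run_cover // => /best_Some [/and3P[_ _]].
  by rewrite inE.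
rewrite !(nth_map e0) // in lt.
have Ej := facet_word fj; rewrite -/wj in Ej.
have [T' [fT' aTi aTj U lxT]] := exchange gj Ej tk pi pj lt.
set a := nth e0 wi p in aTi aTj U.
set k := index (~: T') s.
have kS : k < size s by rewrite index_mem memS.
have nk : nth set0 s k = ~: T' by rewrite nth_index // memS.
exists k, a; rewrite nk; split.
- rewrite ltnNge; apply/negP; rewrite leq_eqVlt => /orP[/eqP jk|jk].
    have aT' : a \in T'.
      have : a \in T' :|: ~: Fj by rewrite U setU11.
      by rewrite inE (negbTE aTj) orbF.
    by move: nk; rewrite -jk -/Fj => hF; move: aTj; rewrite hF setCK aT'.
  have := ordS _ _ js kS jk; rewrite nk /relF -/Fj /keyF setCK.
  case/orP=> [/eqP e|l].
    by move: lxT; rewrite -e /keyF (negbTE (lex_irr _)).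
  by have := lex_irr (map (@rk E) (wd head tail q T')); rewrite (lex_trans lxT l).
- by move: aTj; rewrite inE negbK.
- apply/subsetP => e; rewrite !inE => /andP[eFi ->]; rewrite andbT.
  by apply/eqP => ea; move: aTi; rewrite -ea inE eFi.
- apply/setP => e; have := congr1 (fun X : {set E} => e \in X) U; rewrite /= !inE.
  by case: (e == a); case: (e \in T'); case: (e \in Fj).
Qed.
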